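(* Let $X$ be a supertropical semiring and $n\in\mathbb{N}$. For any pure monomial $m$ in $x_1,\dots,x_n$, the minimal symmetrization $\mathrm{Minsym}_n(m)$ is, as a function $X^n\to X$, a product of elementary symmetric polynomials $e_1,\dots,e_n$ in $x_1,\dots,x_n$.
   Context: A semiring $(X,+,0,\cdot)$: $(X,+,0)$ commutative monoid, $(X,\cdot)$ semigroup, distributivity, $0$ absorbing. $\nu(x)=x+x$. A supertropical semiring is a unital commutative semiring with $2=4$ (where $n=1+\dots+1$), such that $a+b\in\{a,b\}$ whenever $\nu(a)\ne\nu(b)$, and $a+b=\nu(a)$ whenever $\nu(a)=\nu(b)$. For a pure monomial $m=x_1^{c_1}\cdots x_n^{c_n}$ (coefficient $1$), $\mathrm{Minsym}_n(m)$ is the sum, each term taken exactly once, of the distinct monomials in $\{x_{\sigma(1)}^{c_1}\cdots x_{\sigma(n)}^{c_n}:\sigma\in S_n\}$ (monomials equal up to reordering of factors are identified). $e_k(x_1,\dots,x_n)$ is the sum of all products of $k$ distinct variables; the empty product is $1$. *)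

(* Defs.v *)
From HB Require Import structures.
From mathcomp Require Import all_boot all_order all_algebra all_fingroup.
Set Implicit Arguments. Unset Strict Implicit. Unset Printing Implicit Defensive.
Import GRing.Theory.
Local Open Scope ring_scope.

Definition nu (X : comPzSemiRingType) (x : X) : X := x + x.

Definition supertropical (X : comPzSemiRingType) : Prop :=
  [/\ (2%:R : X) = 4%:R,
      (forall a b : X, nu a <> nu b -> a + b = a \/ a + b = b) &
      (forall a b : X, nu a = nu b -> a + b = nu a)].

(* Exponent vectors of the monomials x_{s(1)}^{c_1} ... x_{s(n)}^{c_n}, s in S_n:
   variable x_j carries exponent c_{s^-1(j)}.  Duplicates removed, so each
   distinct monomial appears exactly once. *)
Definition minsym_exps (n : nat) (c : 'I_n -> nat) : seq {ffun 'I_n -> nat} :=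
  undup [seq [ffun j => c ((s^-1)%g j)] | s : 'S_n].

Definition Minsym (X : comPzSemiRingType) (n : nat) (c : 'I_n -> nat)
    (x : 'I_n -> X) : X :=
  \sum_(a <- minsym_exps c) \prod_(i < n) x i ^+ a i.

Definition elsym (X : comPzSemiRingType) (n k : nat) (x : 'I_n -> X) : X :=
  \sum_(A : {set 'I_n} | #|A| == k) \prod_(i in A) x i.

(* Main.v *)
Require Import Defs.
From HB Require Import structures.
From mathcomp Require Import all_boot all_order all_algebra all_fingroup.
From mathcomp Require Import zify.
Set Implicit Arguments. Unset Strict Implicit. Unset Printing Implicit Defensive.
Import GRing.Theory.
Local Open Scope ring_scope.

Lemma nuE (X : comPzSemiRingType) (y : X) : nu y = y *+ 2.
Proof. by rewrite /nu mulr2n. Qed.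

Lemma nunu (X : comPzSemiRingType) (HX : supertropical X) (y : X) : nu (nu y) = nu y.
Proof.
case: HX => H24 _ _.
have -> : nu (nu y) = y *+ 4 by rewrite /nu -!mulr2n -mulrnA.
by rewrite nuE -[y *+ 4]mulr_natl -[y *+ 2]mulr_natl H24.
Qed.

Lemma nuM (X : comPzSemiRingType) (a w : X) : nu (a * w) = nu a * w.
Proof. by rewrite /nu mulrDl. Qed.

Lemma nuX (X : comPzSemiRingType) (a b : X) : nu a = nu b ->
  forall m w, nu (a ^+ m * w) = nu (b ^+ m * w).
Proof.
move=> Hab; elim=> [|m IH] w; first by rewrite !expr0.
by rewrite exprSr -mulrA IH mulrCA nuM Hab -nuM mulrCA mulrA -exprSr.
Qed.

Lemma absorbH (X : comPzSemiRingType) (a b : X) : a + b = b ->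
  forall q, b ^+ q.+2 + a ^+ q.+1 * b = b ^+ q.+2.
Proof.
move=> Hab; elim=> [|q IH].
  by rewrite expr1 -mulrDl addrC Hab.
have E1 : a ^+ q.+1 * (b * b) + a ^+ q.+2 * b = a ^+ q.+1 * (b * b).
  by rewrite addrC exprSr -mulrA -mulrDr -mulrDl Hab.
have E2 : b ^+ q.+3 + a ^+ q.+1 * (b * b) = b ^+ q.+3.
  by rewrite mulrA (exprSr b q.+2) -mulrDl IH.
by rewrite -{1}E2 -addrA E1 E2.
Qed.

Lemma absorb3 (X : comPzSemiRingType) (HX : supertropical X) (a b : X) (p : nat) :
  (0 < p)%N -> a ^+ p.+1 + b ^+ p.+1 + a ^+ p * b = a ^+ p.+1 + b ^+ p.+1.
Proof.
move=> p0; have HX' := HX; case: HX' => H24 H2 H3.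
have [Hab|Hab] := eqVneq (nu a) (nu b).
  have e1 : nu (a ^+ p.+1) = nu (b ^+ p.+1).
    by have := nuX Hab p.+1 1; rewrite !mulr1.
  have e2 : nu (a ^+ p * b) = nu (a ^+ p.+1).
    by rewrite mulrC nuM -Hab -nuM mulrC -exprSr.
  rewrite (H3 _ _ e1) -{2}(nunu HX (a ^+ p.+1)); apply: H3.
  by rewrite nunu // e2.
case: (H2 a b (elimN eqP Hab)) => E.
  have Ha : a ^+ p.+1 + a ^+ p * b = a ^+ p.+1.
    by rewrite exprSr -mulrDr E.
  by rewrite -{2}Ha addrAC.
case: p p0 => // q _.
by rewrite -{2}(absorbH E q) addrA.
Qed.
Definition mono (X : comPzSemiRingType) n (x : 'I_n -> X) (b : 'I_n -> nat) : X :=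
  \prod_(i < n) x i ^+ b i.
Definition supp n (b : 'I_n -> nat) : {set 'I_n} := [set i | (0 < b i)%N].
Definition cnt n (b : 'I_n -> nat) (v : nat) : nat := #|[set i | b i == v]|.
Definition cpr n (c : 'I_n -> nat) : 'I_n -> nat := fun i => (c i).-1.
Definition fA n (A : {set 'I_n}) (a : 'I_n -> nat) : {ffun 'I_n -> nat} :=
  [ffun l => ((l \in A) + a l)%N].

Lemma memLs n (c : 'I_n -> nat) (b : {ffun 'I_n -> nat}) :
  b \in minsym_exps c <-> exists s : 'S_n, forall j, b j = c ((s^-1)%g j).
Proof.
rewrite /minsym_exps mem_undup; split.
  by case/mapP => s _ ->; exists s => j; rewrite ffunE.
case=> s Hs; apply/mapP; exists s; first by rewrite mem_enum.
by apply/ffunP => j; rewrite ffunE.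
Qed.

Lemma cnt_count n (b : 'I_n -> nat) v :
  cnt b v = count (fun i => b i == v) (enum 'I_n).
Proof.
by rewrite /cnt -sum1dep_card -sum1_count big_enum_cond.
Qed.

Lemma cnt_sum n (b : 'I_n -> nat) : (#|supp b| + cnt b 0)%N = n.
Proof.
have -> : supp b = ~: [set i | b i == 0%N].
  by apply/setP => i; rewrite !inE lt0n.
by rewrite addnC /cnt cardsC card_ord.
Qed.

Lemma memL_cnt n (c : 'I_n -> nat) (b : {ffun 'I_n -> nat}) :
  b \in minsym_exps c -> forall v, cnt b v = cnt c v.
Proof.
case/memLs => s Hs v; rewrite /cnt.
rewrite -[RHS](card_preimset _ (@perm_inj _ (s^-1)%g)).
by apply: eq_card => j; rewrite !inE Hs.
Qed.

Lemma cnt_memL n (c : 'I_n -> nat) (b : {ffun 'I_n -> nat}) :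
  (forall v, cnt b v = cnt c v) -> b \in minsym_exps c.
Proof.
move=> H.
have Ht : tval [tuple c i | i < n] = map c (enum 'I_n) by [].
have Hp : perm_eq (map b (enum 'I_n)) [tuple c i | i < n].
  apply/allP => v _; rewrite Ht; apply/eqP.
  have E : forall f : 'I_n -> nat, count_mem v (map f (enum 'I_n)) = cnt f v.
    by move=> f; rewrite cnt_count count_map; apply: eq_count => i /=; rewrite eq_sym.
  by rewrite (E b) (E c) H.
case/tuple_permP: Hp => p Hp.
have Hb : forall j, b j = c (p j).
  move=> j; have := Hp; rewrite /= -/(tval _) => Hp'.
  have : {in enum 'I_n, b =1 (fun i => tnth [tuple c i | i < n] (p i))}.
    by apply/eq_in_map.
  by move/(_ j (mem_enum _ _)); rewrite tnth_mktuple.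
apply/memLs; exists (p^-1)%g => j; by rewrite invgK.
Qed.

Lemma cnt_cprS n (b : 'I_n -> nat) w : cnt (cpr b) w.+1 = cnt b w.+2.
Proof.
by rewrite /cnt; apply: eq_card => i; rewrite !inE /cpr; case: (b i).
Qed.

Lemma cnt_cpr0 n (b : 'I_n -> nat) : cnt (cpr b) 0 = (cnt b 0 + cnt b 1)%N.
Proof.
rewrite /cnt.
have -> : [set i | cpr b i == 0%N] = [set i | b i == 0%N] :|: [set i | b i == 1%N].
  by apply/setP => i; rewrite !inE /cpr; case: (b i) => [|[|k]].
rewrite cardsU.
have -> : [set i | b i == 0%N] :&: [set i | b i == 1%N] = set0.
  by apply/setP => i; rewrite !inE; case: (b i) => [|[|k]].
by rewrite cards0 subn0.
Qed.

Lemma fA_memL n (c : 'I_n -> nat) (A : {set 'I_n}) (a : {ffun 'I_n -> nat}) :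
  a \in minsym_exps (cpr c) -> supp a \subset A -> #|A| = #|supp c| ->
  fA A a \in minsym_exps c.
Proof.
move=> Ha hsub hA; apply: cnt_memL => v.
have Hc := memL_cnt Ha.
have Hout : forall i, i \notin A -> a i = 0%N.
  move=> i iA; apply/eqP; rewrite -leqn0 leqNgt; apply/negP => H.
  by move/subsetP: hsub => /(_ i); rewrite inE H (negPf iA) => /(_ isT).
have s1 := cnt_sum c; have s2 := cnt_sum a; have s3 := cnt_sum (cpr c).
have c0 := cnt_cpr0 c.
case: v => [|[|w]].
- have -> : cnt (fA A a) 0 = #|~: A|.
    rewrite /cnt; apply: eq_card => i; rewrite !inE ffunE.
    by case: (boolP (i \in A)) => iA //=; rewrite Hout.
  have := cardsC A; rewrite card_ord; lia.
- have -> : cnt (fA A a) 1 = #|A :\: supp a|.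
    rewrite /cnt; apply: eq_card => i; rewrite !inE ffunE.
    case: (boolP (i \in A)) => iA /=; last by rewrite Hout.
    by rewrite add1n eqSS lt0n negbK andbT.
  rewrite cardsD (setIidPr hsub).
  have := Hc 0%N; lia.
- have -> : cnt (fA A a) w.+2 = cnt a w.+1.
    rewrite /cnt; apply: eq_card => i; rewrite !inE ffunE.
    by case: (boolP (i \in A)) => iA /=; last by rewrite Hout.
  by rewrite Hc cnt_cprS.
Qed.

Lemma fA_supp n (A : {set 'I_n}) (a : {ffun 'I_n -> nat}) :
  supp a \subset A -> supp (fA A a) = A.
Proof.
move=> hsub; apply/setP => i; rewrite !inE ffunE.
case: (boolP (i \in A)) => iA //=.
apply/negP => H; move/subsetP: hsub => /(_ i); rewrite inE H (negPf iA).
by move/(_ isT).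
Qed.

Lemma memL_pred n (c : 'I_n -> nat) (b : {ffun 'I_n -> nat}) :
  b \in minsym_exps c -> [ffun l => (b l).-1] \in minsym_exps (cpr c).
Proof.
case/memLs => s Hs; apply/memLs; exists s => j.
by rewrite ffunE Hs.
Qed.

Lemma memL_suppcard n (c : 'I_n -> nat) (b : {ffun 'I_n -> nat}) :
  b \in minsym_exps c -> #|supp b| = #|supp c|.
Proof.
move=> Hb; have := cnt_sum b; have := cnt_sum c; rewrite (memL_cnt Hb 0); lia.
Qed.

Lemma memL_perm n (c : 'I_n -> nat) (b : {ffun 'I_n -> nat}) (s : 'S_n) :
  b \in minsym_exps c -> [ffun l => b (s l)] \in minsym_exps c.
Proof.
move=> Hb; apply: cnt_memL => v; rewrite -(memL_cnt Hb v) /cnt.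
rewrite -[RHS](card_preimset _ (@perm_inj _ s)).
by apply: eq_card => j; rewrite !inE ffunE.
Qed.

Lemma MinsymE (X : comPzSemiRingType) n (c : 'I_n -> nat) (x : 'I_n -> X) :
  Minsym c x = \sum_(a <- minsym_exps c) mono x a.
Proof. by []. Qed.

Lemma mono_perm (X : comPzSemiRingType) n (x : 'I_n -> X) (b : 'I_n -> nat) (s : 'S_n) :
  mono x (fun l => b (s l)) = mono (fun m => x ((s^-1)%g m)) b.
Proof.
rewrite /mono [RHS](reindex_inj (@perm_inj _ s)) /=.
by apply: eq_bigr => i _; rewrite permK.
Qed.

Lemma Minsym_perm (X : comPzSemiRingType) n (c : 'I_n -> nat) (x : 'I_n -> X) (s : 'S_n) :
  Minsym c (fun m => x (s m)) = Minsym c x.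
Proof.
rewrite !MinsymE.
have E : forall b : {ffun 'I_n -> nat},
    mono (fun m => x (s m)) b = mono x [ffun l => b ((s^-1)%g l)].
  move=> b; rewrite /mono.
  have := mono_perm x b (s^-1)%g; rewrite invgK /mono => <-.
  by apply: eq_bigr => i _; rewrite ffunE.
under eq_bigr do rewrite E.
rewrite -(big_map (fun b : {ffun 'I_n -> nat} => [ffun l => b ((s^-1)%g l)]) xpredT (mono x)).
apply: perm_big; apply: uniq_perm.
- rewrite map_inj_uniq ?undup_uniq //.
  move=> b1 b2 /ffunP H; apply/ffunP => l.
  by have := H (s l); rewrite !ffunE permK.
- exact: undup_uniq.
move=> w; apply/mapP/idP.
  by case=> b Hb ->; apply: memL_perm.
move=> Hw; exists [ffun l => w (s l)]; first exact: memL_perm.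
by apply/ffunP => l; rewrite !ffunE permKV.
Qed.

Definition Pabs (X : comPzSemiRingType) n (c : 'I_n -> nat) (b : 'I_n -> nat) :=
  forall x : 'I_n -> X, Minsym c x + mono x b = Minsym c x.

Lemma Pabs_perm (X : comPzSemiRingType) n (c : 'I_n -> nat) (b : {ffun 'I_n -> nat}) (s : 'S_n) :
  Pabs X c b -> Pabs X c [ffun l => b (s l)].
Proof.
move=> H x.
have -> : mono x [ffun l => b (s l)] = mono (fun m => x ((s^-1)%g m)) b.
  rewrite -mono_perm; rewrite /mono; apply: eq_bigr => i _; by rewrite ffunE.
rewrite -(Minsym_perm c x (s^-1)%g); exact: H.
Qed.

Lemma mono_split (X : comPzSemiRingType) n (x : 'I_n -> X) (b : 'I_n -> nat) i j :
  i != j -> mono x b =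
    x i ^+ b i * (x j ^+ b j * \prod_(l | (l != i) && (l != j)) x l ^+ b l).
Proof.
move=> ij; rewrite /mono (bigD1 i) //= (bigD1 j) /=; last by rewrite eq_sym.
by [].
Qed.

Lemma decompL (X : comPzSemiRingType) n (c : 'I_n -> nat) (x : 'I_n -> X) w :
  w \in minsym_exps c ->
  Minsym c x = mono x w + \sum_(a <- minsym_exps c | a != w) mono x a.
Proof. by move=> Hw; rewrite MinsymE (bigD1_seq w Hw (undup_uniq _)). Qed.

Lemma abs_core (X : comPzSemiRingType) (HX : supertropical X) n (c : 'I_n -> nat)
    (u b : {ffun 'I_n -> nat}) i j p :
  i != j -> (0 < p)%N -> u i = p.+1 -> u j = 0%N -> b i = p -> b j = 1%N ->
  (forall l, l != i -> l != j -> b l = u l) ->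
  (u \in minsym_exps c \/ Pabs X c u) -> Pabs X c b.
Proof.
move=> ij p0 ui uj bi bj bl Qu.
set v := [ffun l => u (tperm i j l)].
have Qv : v \in minsym_exps c \/ Pabs X c v.
  by case: Qu => H; [left; apply: memL_perm | right; apply: Pabs_perm].
have uv : u != v.
  apply/negP => /eqP E; have := congr1 (fun f : {ffun 'I_n -> nat} => f i) E.
  by rewrite /v ffunE tpermL uj ui.
have Ex : forall x : 'I_n -> X, mono x u + mono x v + mono x b = mono x u + mono x v.
  move=> x; rewrite !(mono_split x _ ij).
  have Rv : \prod_(l | (l != i) && (l != j)) x l ^+ v l =
            \prod_(l | (l != i) && (l != j)) x l ^+ u l.
    apply: eq_bigr => l /andP[li lj]; rewrite /v ffunE tpermD //; by rewrite eq_sym.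
  have Rb : \prod_(l | (l != i) && (l != j)) x l ^+ b l =
            \prod_(l | (l != i) && (l != j)) x l ^+ u l.
    by apply: eq_bigr => l /andP[li lj]; rewrite bl.
  rewrite Rv Rb /v !ffunE tpermL tpermR ui uj bi bj.
  set M := \prod_(l | _) _.
  rewrite !expr0 !mul1r expr1 (mulrA (x i ^+ p)) -!mulrDl.
  by rewrite absorb3.
move=> x.
have [R HR] : exists R, Minsym c x = mono x u + mono x v + R.
  have [R1 HR1] : exists R1, Minsym c x = mono x u + R1.
    case: Qu => Hu; first by eexists; apply: decompL.
    by exists (Minsym c x); rewrite addrC Hu.
  case: Qv => Hv; last by exists R1; rewrite -(Hv x) {1}HR1 addrAC.
  case: Qu => Hu.
    rewrite MinsymE (bigD1_seq u Hu (undup_uniq _)) -big_filter.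
    have Hv' : v \in [seq a <- minsym_exps c | a != u] by rewrite mem_filter eq_sym uv Hv.
    rewrite (bigD1_seq v Hv' (filter_uniq _ (undup_uniq _))).
    by eexists; exact: addrA.
  exists (\sum_(a <- minsym_exps c | a != v) mono x a).
  by rewrite -{1}(Hu x) {1}(decompL x Hv) addrC addrA.
by rewrite HR addrAC Ex.
Qed.

Lemma extra_abs (X : comPzSemiRingType) (HX : supertropical X) n (c : 'I_n -> nat)
    (A : {set 'I_n}) (a : {ffun 'I_n -> nat}) :
  a \in minsym_exps (cpr c) -> #|A| = #|supp c| -> ~~ (supp a \subset A) ->
  Pabs X c (fA A a).
Proof.
move=> Ha hA hns.
have sa : (#|supp a| <= #|supp c|)%N.
  have := memL_cnt Ha 0; rewrite cnt_cpr0.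
  have := cnt_sum a; have := cnt_sum c; lia.
have step : forall m (B : {set 'I_n}), #|B| = #|supp c| -> #|supp a :\: B| = m.+1 ->
    (forall B' : {set 'I_n}, #|B'| = #|supp c| -> #|supp a :\: B'| = m ->
       fA B' a \in minsym_exps c \/ Pabs X c (fA B' a)) ->
    Pabs X c (fA B a).
  move=> m B hB hm IHQ.
  have [i iS] : exists i, i \in supp a :\: B by apply/card_gt0P; rewrite hm.
  have : (0 < #|B :\: supp a|)%N.
    move: hm; rewrite !cardsD setIC hB => h; rewrite subn_gt0; apply: (leq_trans _ sa); by rewrite -subn_gt0 h.
  case/card_gt0P => j jS.
  move: iS jS; rewrite !inE => /andP[iB ia] /andP[ja jB].
  have ij : i != j by apply/eqP => E; move: iB; rewrite E jB.
  set B' := i |: (B :\ j).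
  have hB' : #|B'| = #|supp c|.
    rewrite cardsU1 !inE (negbTE iB) andbF /=.
    by have := cardsD1 j B; rewrite jB /= => <-.
  have hm' : #|supp a :\: B'| = m.
    have -> : supp a :\: B' = (supp a :\: B) :\ i.
      apply/setP => l; rewrite !inE.
      case lj: (l == j).
        by move/eqP: lj => ->; rewrite (negbTE ja) !andbF.
      by rewrite /= negb_or andbA.
    have := cardsD1 i (supp a :\: B); rewrite !inE iB ia hm /=; lia.
  have Qu := IHQ B' hB' hm'.
  apply: (abs_core HX (u := fA B' a) (i := i) (j := j) (p := a i)) => //.
  - by rewrite ffunE setU11 add1n.
  - rewrite ffunE !inE eqxx eq_sym (negbTE ij) /=.
    by move: ja; rewrite lt0n negbK => /eqP ->.
  - by rewrite ffunE (negbTE iB).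
  - by move: ja; rewrite ffunE jB lt0n negbK => /eqP ->.
  - by move=> l li lj; rewrite !ffunE !inE (negbTE li) lj.
suff H : forall m (B : {set 'I_n}), #|B| = #|supp c| -> #|supp a :\: B| = m.+1 ->
    Pabs X c (fA B a).
  apply: (H (#|supp a :\: A|.-1)) => //.
  have : (0 < #|supp a :\: A|)%N by rewrite lt0n cards_eq0 setD_eq0.
  lia.
elim=> [|m IH] B hB hm; apply: (step _ B hB hm) => B' hB' hm'.
  left; apply: fA_memL => //.
  by rewrite -setD_eq0 -cards_eq0 hm'.
by right; apply: IH.
Qed.

Lemma main_sum (X : comPzSemiRingType) n (c : 'I_n -> nat) (x : 'I_n -> X) :
  \sum_(A : {set 'I_n} | #|A| == #|supp c|)
     \sum_(a <- minsym_exps (cpr c) | supp a \subset A) mono x (fA A a) = Minsym c x.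
Proof.
rewrite MinsymE.
have E1 : \sum_(b <- minsym_exps c) mono x b =
    \sum_(b <- minsym_exps c) \sum_(A : {set 'I_n} | #|A| == #|supp c|)
        (if supp b == A then mono x b else 0).
  rewrite big_seq [RHS]big_seq; apply: eq_bigr => b Hb.
  rewrite -big_mkcondr /= (big_pred1 (supp b)) // => A /=.
  rewrite [supp b == A]eq_sym; case: (eqVneq A (supp b)) => [->|]; last by rewrite andbF.
  by rewrite (memL_suppcard Hb) eqxx.
rewrite E1 exchange_big /=; apply: eq_bigr => A /eqP hA.
rewrite -big_mkcond -[LHS]big_filter -[RHS]big_filter.
transitivity (\sum_(w <- map (fun a : {ffun 'I_n -> nat} => fA A a) [seq a : {ffun 'I_n -> nat} <- minsym_exps (cpr c) | supp a \subset A]) mono x w).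
  by rewrite big_map.
apply: perm_big; apply: uniq_perm.
- rewrite map_inj_uniq ?filter_uniq ?undup_uniq //.
  move=> a1 a2 /ffunP H; apply/ffunP => l.
  by have := H l; rewrite !ffunE => /addnI.
- by rewrite filter_uniq ?undup_uniq.
move=> w; apply/mapP/idP.
  case=> a; rewrite mem_filter => /andP[hs ha] ->.
  by rewrite mem_filter fA_supp // eqxx fA_memL.
rewrite mem_filter => /andP[/eqP hw Hw].
exists [ffun l => (w l).-1].
  rewrite mem_filter memL_pred // andbT.
  apply/subsetP => l; rewrite -hw !inE ffunE; by case: (w l).
by apply/ffunP => l; rewrite !ffunE -hw inE; case: (w l).
Qed.

Lemma decomp (X : comPzSemiRingType) n (c : 'I_n -> nat) (x : 'I_n -> X) :
  elsym #|supp c| x * Minsym (cpr c) x =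
  \sum_(A : {set 'I_n} | #|A| == #|supp c|)
     \sum_(a <- minsym_exps (cpr c)) mono x (fA A a).
Proof.
rewrite /elsym mulr_suml; apply: eq_bigr => A _.
rewrite MinsymE mulr_sumr; apply: eq_bigr => a _.
rewrite /mono big_mkcond /= -big_split /=; apply: eq_bigr => i _.
rewrite ffunE exprD; case: (i \in A); by rewrite ?expr1 ?expr0 ?mul1r.
Qed.

Lemma add_abs (X : comPzSemiRingType) (I : Type) (r : seq I) (P : pred I)
    (F : I -> X) (S : X) :
  (forall i, P i -> S + F i = S) -> S + \sum_(i <- r | P i) F i = S.
Proof.
move=> H; elim: r => [|y r IH]; first by rewrite big_nil addr0.
rewrite big_cons; case: ifP => Py //.
by rewrite addrA H.
Qed.

Lemma stepI (X : comPzSemiRingType) (HX : supertropical X) n (c : 'I_n -> nat)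
    (x : 'I_n -> X) :
  elsym #|supp c| x * Minsym (cpr c) x = Minsym c x.
Proof.
rewrite decomp.
under eq_bigr => A _ do rewrite (bigID (fun a : {ffun 'I_n -> nat} => supp a \subset A)) /=.
rewrite big_split /= main_sum.
apply: add_abs => A /eqP hA.
rewrite big_seq_cond; apply: add_abs => a /andP[Ha hns].
exact: (extra_abs HX Ha hA hns x).
Qed.

Lemma sum_cpr n (c : 'I_n -> nat) : #|supp c| != 0%N ->
  (\sum_i cpr c i < \sum_i c i)%N.
Proof.
rewrite -lt0n => /card_gt0P [i]; rewrite inE => hi.
rewrite (bigD1 i) //= [X in (_ < X)%N](bigD1 i) //=.
rewrite -addSn; apply: leq_add; first by rewrite /cpr prednK.
by apply: leq_sum => j _; rewrite /cpr leq_pred.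
Qed.

Lemma zero_case (X : comPzSemiRingType) n (c : 'I_n -> nat) (x : 'I_n -> X) :
  #|supp c| = 0%N -> Minsym c x = 1.
Proof.
move/eqP; rewrite cards_eq0 => /eqP hs.
have hc : forall i, c i = 0%N.
  move=> i; apply/eqP; rewrite -leqn0 leqNgt; apply/negP => h.
  by have := in_set0 i; rewrite -hs inE h.
rewrite MinsymE (perm_big [:: [ffun => 0%N]]).
  by rewrite big_seq1 /mono; apply: big1 => i _; rewrite ffunE expr0.
apply: uniq_perm; rewrite ?undup_uniq //.
move=> w; rewrite inE; apply/idP/eqP.
  by case/memLs => s Hs; apply/ffunP => j; rewrite Hs hc ffunE.
move=> ->; apply/memLs; exists 1%g => j; by rewrite ffunE hc.
Qed.

Unset Implicit Arguments.

Theorem lemma5p8 (X : comPzSemiRingType) (HX : supertropical X)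
    (n : nat) (c : 'I_n -> nat) :
  exists d : 'I_n -> nat,
    forall x : 'I_n -> X,
      Minsym c x = \prod_(k < n) elsym k.+1 x ^+ d k.
Proof.
suff H : forall m (c : 'I_n -> nat), (\sum_i c i < m)%N ->
    exists d : 'I_n -> nat, forall x : 'I_n -> X,
      Minsym c x = \prod_(k < n) elsym k.+1 x ^+ d k.
  exact: (H _ c (ltnSn _)).
elim=> [|m IH] c0 Hc //.
case: (eqVneq #|supp c0| 0%N) => hk.
  exists (fun _ => 0%N) => x; rewrite zero_case //.
  by rewrite big1 // => k _; rewrite expr0.
have [d' Hd'] := IH (cpr c0) (leq_trans (sum_cpr hk) Hc).
have kn : (#|supp c0|.-1 < n)%N.
  have := max_card (mem (supp c0)); rewrite card_ord.
  by move: hk; rewrite -lt0n => h1 h2; rewrite prednK.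
exists (fun m => d' m + (m == Ordinal kn))%N => x.
rewrite -(stepI HX) Hd' /=.
rewrite [RHS](eq_bigr (fun k : 'I_n => elsym k.+1 x ^+ d' k * elsym k.+1 x ^+ (k == Ordinal kn))); last first.
  by move=> k _; rewrite exprD.
rewrite big_split /= mulrC; congr (_ * _).
rewrite (bigD1 (Ordinal kn)) //= eqxx expr1 big1 ?mulr1.
  by rewrite prednK // lt0n.
by move=> k /negbTE ->; rewrite expr0.
Qed.
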